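(* Let $K$ be a field, let $r, p$ be nonnegative integers and $s, n, q, m$ positive integers. Suppose there exist an $[p, q, m]$-formula and a $[1, q, m]$-formula over $K$ which are amicable. Then, if an $[r+1, s, n]$-formula exists over $K$, an $[r+p,\; sq,\; nm]$-formula exists over $K$.
   Context: For nonnegative integers $r$ and positive integers $s, n$, a sum-of-squares formula of size $[r,s,n]$ (an $[r,s,n]$-formula) over a field $K$ is an identity $(x_1^2+\cdots+x_r^2)(y_1^2+\cdots+y_s^2) = z_1^2+\cdots+z_n^2$ in the polynomial ring over $K$ in independent indeterminates $x_1,\dots,x_r,y_1,\dots,y_s$, where each $z_k$ is a bilinear form in $X=(x_1,\dots,x_r)$ and $Y=(y_1,\dots,y_s)$ with coefficients in $K$. Writing $Z = (x_1A_1+\cdots+x_rA_r)Y$ with $n\times s$ matrices $A_i$ over $K$, such a formula is the same as a system of $n\times s$ matrices $A_1,\dots,A_r$ over $K$ satisfying the Hurwitz equations: $A_i^{\mathsf T}A_i = 1_s$ for all $i$, and $A_i^{\mathsf T}A_j + A_j^{\mathsf T}A_i = 0$ for all $i\neq j$. A $[p,s,n]$-formula given by $n\times s$ matrices $A_1,\dots,A_p$ and a $[q,s,n]$-formula given by $n\times s$ matrices $B_1,\dots,B_q$ (both systems satisfying the Hurwitz equations) are called amicable if $A_i^{\mathsf T}B_k = B_k^{\mathsf T}A_i$ for every $1\le i\le p$ and $1\le k\le q$. *)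

(* Defs.v *)
From HB Require Import structures.
From mathcomp Require Import all_boot all_order all_algebra.
Set Implicit Arguments. Unset Strict Implicit. Unset Printing Implicit Defensive.
Import GRing.Theory.
Local Open Scope ring_scope.

Definition hurwitz (K : fieldType) (r s n : nat) (A : 'I_r -> 'M[K]_(n, s)) : Prop :=
  (forall i, (A i)^T *m A i = 1%:M) /\
  (forall i j, i != j -> (A i)^T *m A j + (A j)^T *m A i = 0).

Definition sos_formula_exists (K : fieldType) (r s n : nat) : Prop :=
  exists A : 'I_r -> 'M[K]_(n, s), hurwitz A.

Definition amicable (K : fieldType) (p q s n : nat)
  (A : 'I_p -> 'M[K]_(n, s)) (B : 'I_q -> 'M[K]_(n, s)) : Prop :=
  hurwitz A /\ hurwitz B /\
  (forall i k, (A i)^T *m B k = (B k)^T *m A i).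

(* Main.v *)
Require Import Defs.
From mathcomp Require Import all_boot all_order all_algebra.
From mathcomp Require Import mxtens.
Set Implicit Arguments. Unset Strict Implicit. Unset Printing Implicit Defensive.
Import GRing.Theory.
Local Open Scope ring_scope.

Lemma tensDl (K : fieldType) m n p q (X Y : 'M[K]_(m,n)) (Z : 'M[K]_(p,q)) :
  (X + Y) *t Z = X *t Z + Y *t Z.
Proof. by apply/matrixP=> i j; rewrite !mxE mulrDl. Qed.

Lemma tensDr (K : fieldType) m n p q (X : 'M[K]_(m,n)) (Y Z : 'M[K]_(p,q)) :
  X *t (Y + Z) = X *t Y + X *t Z.
Proof. by apply/matrixP=> i j; rewrite !mxE mulrDr. Qed.

Lemma tens11 (K : fieldType) n m : (1%:M : 'M[K]_n) *t (1%:M : 'M[K]_m) = 1%:M.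
Proof.
apply/matrixP=> i j.
case: (mxtens_indexP i)=> i0 i1; case: (mxtens_indexP j)=> j0 j1.
rewrite tensmxE !mxE.
have -> : (mxtens_index (i0, i1) == mxtens_index (j0, j1)) = ((i0, i1) == (j0, j1)).
  apply/eqP/eqP => [h|->] //.
  by rewrite -(mxtens_indexK (i0,i1)) h mxtens_indexK.
rewrite xpair_eqE.
by case: (i0 == j0); case: (i1 == j1); rewrite /= ?mulr1n ?mulr0n ?mulr1 ?mulr0 ?mul0r.
Qed.

Theorem mainTheorem2 (K : fieldType) (r p s n q m : nat)
  (hs : (0 < s)%N) (hn : (0 < n)%N) (hq : (0 < q)%N) (hm : (0 < m)%N) :
  (exists (A : 'I_p -> 'M[K]_(m, q)) (B : 'I_1 -> 'M[K]_(m, q)), amicable A B) ->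
  sos_formula_exists K r.+1 s n ->
  sos_formula_exists K (r + p) (s * q) (n * m).
Proof.
move=> [A [B [[A1 A2] [[B1 _] AB]]]] [C [C1 C2]].
pose G (x : 'I_r + 'I_p) : 'M[K]_(n * m, s * q) :=
  match x with inl j => C (lift ord0 j) *t B ord0 | inr i => C ord0 *t A i end.
have G1 : forall x, (G x)^T *m G x = 1%:M.
  by case=> [j|i]; rewrite /G trmx_tens tensmx_mul ?C1 ?B1 ?A1 tens11.
have G2 : forall x y, x != y -> (G x)^T *m G y + (G y)^T *m G x = 0.
  case=> [j|i] [j'|i'] hxy; rewrite /G !trmx_tens !tensmx_mul.
  - have h : lift ord0 j != lift ord0 j' :> 'I_r.+1.
      by apply/negP => /eqP /lift_inj e; move: hxy; rewrite e eqxx.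
    by rewrite -tensDl (C2 _ _ h) tens0mx.
  - have h : lift ord0 j != ord0 :> 'I_r.+1 by rewrite eq_sym neq_lift.
    by rewrite AB -tensDl (C2 _ _ h) tens0mx.
  - have h : ord0 != lift ord0 j' :> 'I_r.+1 by rewrite neq_lift.
    by rewrite AB -tensDl (C2 _ _ h) tens0mx.
  - have h : i != i'.
      by apply/negP => /eqP e; move: hxy; rewrite e eqxx.
    by rewrite -tensDr (A2 _ _ h) tensmx0.
exists (fun k => G (split k)); split=> [i|i j hij]; first exact: G1.
apply: G2; apply: contra hij => /eqP h.
by rewrite -(splitK i) h splitK.
Qed.
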